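(* Consider SEMO on \textsc{LOTZ} in which the parent is chosen from the current population by some parent selection mechanism. The expected time for SEMO to reach the Pareto front (i.e. to have a Pareto-optimal point in its population) is $O(n^2)$. Assume that afterwards, in every iteration in which the population does not cover the whole Pareto front, the probability of selecting a good individual is at least $p_{\mathrm{good}}$. Then the expected time for SEMO to reach a population covering the whole Pareto front of \textsc{LOTZ} is $O(n^2/p_{\mathrm{good}})$.
   Context: Search space $\{0,1\}^n$; objectives maximised. $\textsc{LOTZ}(x)=(\mathrm{LO}(x),\mathrm{TZ}(x))$, $\mathrm{LO}$ = number of leading ones, $\mathrm{TZ}$ = number of trailing zeros. Dominance: $y$ dominates $x$ if $f_i(y)\ge f_i(x)$ for all $i$, strictly for some $i$; weakly dominates if $\ge$ in all. Pareto set $X^*=\{1^i0^{n-i}:0\le i\le n\}$, front $F^*=f(X^* )$. SEMO: start with uniform random $s$, $P=\{s\}$. Each iteration: choose a parent $s\in P$ by the parent selection mechanism; create $s'$ by flipping one uniformly random bit; if $s'$ is not dominated by any member of $P$, add it and remove all members weakly dominated by $s'$. Time = number of iterations. Good: w.r.t. $P$, $x\in P\cap X^*$ is good if some Hamming neighbour $y$ of $x$ satisfies $y\in X^*$ and $f(y)\notin f(P)$. *)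

(* Defs.v *)
From HB Require Import structures.
From mathcomp Require Import all_boot all_order all_algebra.
From mathcomp Require Import all_classical all_reals all_analysis.
Set Implicit Arguments. Unset Strict Implicit. Unset Printing Implicit Defensive.
Import Order.TTheory GRing.Theory Num.Theory.

Local Open Scope ring_scope.
Section SEMO.
Variable n : nat.

(* search space {0,1}^n ; bit i is x i, position 1..n <-> i = 0..n-1 *)
Definition bs := {ffun 'I_n -> bool}.

Definition bits (x : bs) : seq bool := [seq x i | i <- enum 'I_n].

Definition LO (x : bs) : nat := find negb (bits x).
Definition TZ (x : bs) : nat := find id (rev (bits x)).
Definition LOTZ (x : bs) : nat * nat := (LO x, TZ x).

Definition dominates (u v : nat * nat) : bool :=
  [&& (v.1 <= u.1)%N, (v.2 <= u.2)%N & ((v.1 < u.1)%N || (v.2 < u.2)%N)].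
Definition wdominates (u v : nat * nat) : bool := ((v.1 <= u.1)%N && (v.2 <= u.2)%N).

Definition pareto_opt (x : bs) : bool :=
  [forall y : bs, ~~ dominates (LOTZ y) (LOTZ x)].

Definition flip (x : bs) (i : 'I_n) : bs :=
  [ffun j => if j == i then ~~ x j else x j].

Definition semo_step (P : {set bs}) (s : bs) (i : 'I_n) : {set bs} :=
  let s' := flip s i in
  if [exists y in P, dominates (LOTZ y) (LOTZ s')] then P
  else s' |: [set y in P | ~~ wdominates (LOTZ s') (LOTZ y)].

(* A history = initial individual and the list of (parent, flipped bit)
   choices made so far; the population is determined by it. *)
Definition pop_after (s0 : bs) (cs : seq (bs * 'I_n)) : {set bs} :=
  foldl (fun P c => semo_step P c.1 c.2) [set s0] cs.

Definition reached_front (P : {set bs}) : bool := [exists x in P, pareto_opt x].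
Definition covers_front (P : {set bs}) : bool :=
  [forall y : bs, pareto_opt y ==> [exists x in P, LOTZ x == LOTZ y]].

(* good individuals w.r.t. P (Hamming neighbours = single bit flips) *)
Definition good (P : {set bs}) (x : bs) : bool :=
  [&& x \in P, pareto_opt x &
      [exists i : 'I_n, pareto_opt (flip x i) &&
         ~~ [exists z in P, LOTZ z == LOTZ (flip x i)]]].

Variable R : realType.

(* A parent selection mechanism: given the history (s0, cs) it gives the
   probability sel s0 cs x of choosing x as parent; it may depend on the
   whole history. *)
Definition selection := bs -> seq (bs * 'I_n) -> bs -> R.

Definition valid_selection (sel : selection) : Prop :=
  forall s0 cs,
    [/\ forall x, 0 <= sel s0 cs x,
        forall x, x \notin pop_after s0 cs -> sel s0 cs x = 0
      & \sum_(x in pop_after s0 cs) sel s0 cs x = 1].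

Fixpoint path_prob_from (sel : selection) (s0 : bs) (pre cs : seq (bs * 'I_n)) : R :=
  match cs with
  | [::] => 1
  | c :: cs' => sel s0 pre c.1 * (n%:R)^-1 * path_prob_from sel s0 (rcons pre c) cs'
  end.

(* probability of the history (s0, cs): uniform initial point, then choices *)
Definition hist_prob (sel : selection) (s0 : bs) (cs : seq (bs * 'I_n)) : R :=
  (2 ^ n)%:R^-1 * path_prob_from sel s0 [::] cs.

(* Pr[T_E > t], T_E = number of iterations until the population satisfies E *)
Definition tail_prob (sel : selection) (E : {set bs} -> bool) (t : nat) : R :=
  \sum_(s0 : bs) \sum_(cs : t.-tuple (bs * 'I_n))
     (if [forall k : 'I_t.+1, ~~ E (pop_after s0 (take k cs))]
      then hist_prob sel s0 cs else 0).

(* E[T_E] = sum_{t >= 0} Pr[T_E > t]  (possibly +oo) *)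
Definition expected_time (sel : selection) (E : {set bs} -> bool) : \bar R :=
  (\sum_(t <oo) (tail_prob sel E t)%:E)%E.

End SEMO.

(* Main.v *)
Require Import Defs.
From HB Require Import structures.
From mathcomp Require Import all_boot all_order all_algebra.
From mathcomp Require Import all_classical all_reals all_analysis.
From mathcomp Require Import zify ring lra.
Import Order.TTheory GRing.Theory Num.Theory.
Set Implicit Arguments. Unset Strict Implicit. Unset Printing Implicit Defensive.
Local Open Scope ring_scope.

Section Bits.
Local Open Scope nat_scope.
Variable n : nat.
Implicit Types x y : bs n.

Lemma size_bits x : size (bits x) = n.
Proof. by rewrite /bits size_map size_enum_ord. Qed.

Lemma nth_bits x (j : 'I_n) : nth false (bits x) j = x j.
Proof. by rewrite /bits (nth_map j) ?size_enum_ord // nth_ord_enum. Qed.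

Lemma LO_le x : LO x <= n.
Proof. by have := find_size negb (bits x); rewrite size_bits. Qed.

Lemma LO_true x (j : 'I_n) : j < LO x -> x j.
Proof. by move=> /(before_find false); rewrite nth_bits => /negbFE. Qed.

Lemma LO_false x (j : 'I_n) : x j = false -> LO x <= j.
Proof. by move=> xj; rewrite leqNgt; apply/negP => /LO_true; rewrite xj. Qed.

Lemma LO_ge x k : k <= n -> (forall j : 'I_n, j < k -> x j) -> k <= LO x.
Proof.
move=> kn H; rewrite leqNgt; apply/negP => lt.
have hn : LO x < n by apply: leq_trans lt kn.
have : has negb (bits x) by rewrite has_find size_bits.
move=> /(nth_find false); rewrite -/(LO x).
by rewrite -[LO x]/(nat_of_ord (Ordinal hn)) nth_bits H.
Qed.

Lemma TZ_le x : TZ x <= n.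
Proof. by have := find_size id (rev (bits x)); rewrite size_rev size_bits. Qed.

Lemma TZ_false x (j : 'I_n) : n - TZ x <= j -> x j = false.
Proof.
move=> h.
have hi : n - j.+1 < TZ x by have := ltn_ord j; lia.
have := before_find false hi.
rewrite nth_rev ?size_bits; last by have := ltn_ord j; lia.
have -> : n - (n - j.+1).+1 = j by have := ltn_ord j; lia.
by rewrite nth_bits.
Qed.

Lemma TZ_true x (j : 'I_n) : x j -> TZ x + j < n.
Proof.
move=> xj; rewrite ltnNge; apply/negP => h.
by rewrite TZ_false in xj => //; lia.
Qed.

Lemma TZ_ge x k : k <= n -> (forall j : 'I_n, n - k <= j -> x j = false) -> k <= TZ x.
Proof.
move=> kn H; rewrite leqNgt; apply/negP => lt.
have hn : TZ x < n by apply: leq_trans lt kn.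
have : has id (rev (bits x)) by rewrite has_find size_rev size_bits.
move=> /(nth_find false); rewrite -/(TZ x).
rewrite nth_rev ?size_bits //.
have hj : n - (TZ x).+1 < n by lia.
rewrite -[n - (TZ x).+1]/(nat_of_ord (Ordinal hj)) nth_bits H //=; lia.
Qed.

Lemma LOTZ_le x : LO x + TZ x <= n.
Proof.
rewrite leqNgt; apply/negP => h.
have := LO_le x; have := TZ_le x => l1 l2.
have hj : n - TZ x < n by lia.
have h1 : (Ordinal hj : nat) < LO x by rewrite /=; lia.
have := LO_true h1; rewrite TZ_false //.
Qed.

Lemma flipE x i j : flip x i j = if j == i then ~~ x j else x j.
Proof. by rewrite /flip ffunE. Qed.

Lemma dominates_sum u v : dominates u v -> v.1 + v.2 < u.1 + u.2.
Proof. by case/and3P => h1 h2 /orP[]; lia. Qed.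

Lemma improve x (h : LO x < n) : LO x + TZ x < n ->
  dominates (LOTZ (flip x (Ordinal h))) (LOTZ x).
Proof.
move=> hs.
have xa : x (Ordinal h) = false.
  apply/negP => xa. suff : (LO x).+1 <= LO x by rewrite ltnn.
  apply: LO_ge (h) _ => j; rewrite ltnS leq_eqVlt => /orP[/eqP e|].
    by have -> : j = Ordinal h by apply/val_inj.
  exact: LO_true.
have h1 : (LO x).+1 <= LO (flip x (Ordinal h)).
  apply: LO_ge => // j; rewrite flipE ltnS leq_eqVlt => /orP[/eqP e|lt].
    have -> : j = Ordinal h by apply/val_inj.
    by rewrite eqxx xa.
  have -> : (j == Ordinal h) = false by apply/negP => /eqP e; rewrite e /= ltnn in lt.
  exact: LO_true.
have h2 : TZ x <= TZ (flip x (Ordinal h)).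
  apply: TZ_ge; first exact: TZ_le.
  move=> j hj; rewrite flipE.
  have -> : (j == Ordinal h) = false by apply/negP => /eqP e; rewrite e /= in hj; lia.
  exact: TZ_false.
rewrite /dominates /=; apply/and3P; split => //; [lia | lia].
Qed.

Lemma flip_nonopt x i : LO x + TZ x < n ->
  dominates (LOTZ x) (LOTZ (flip x i)) || wdominates (LOTZ (flip x i)) (LOTZ x).
Proof.
move=> hs.
have hb : n - (TZ x).+1 < n by lia.
have xb : x (Ordinal hb).
  apply/negPn/negP => xb.
  suff : (TZ x).+1 <= TZ x by rewrite ltnn.
  apply: TZ_ge; first lia. move=> j hj.
  have [e|ne] := eqVneq j (Ordinal hb); first by rewrite e; apply/negbTE.
  apply: TZ_false. have : (j : nat) != n - (TZ x).+1 by apply: contra ne => /eqP e; apply/eqP/val_inj.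
  lia.
have ha : LO x < n by lia.
have xa : x (Ordinal ha) = false.
  apply/negP => xa. suff : (LO x).+1 <= LO x by rewrite ltnn.
  apply: LO_ge (ha) _ => j; rewrite ltnS leq_eqVlt => /orP[/eqP e|].
    have -> : j = Ordinal ha by apply/val_inj.
    by rewrite xa.
  exact: LO_true.
have [lt|ge] := ltnP i (LO x).
  apply/orP; left.
  have h1 : LO (flip x i) <= i.
    by apply: LO_false; rewrite flipE eqxx LO_true.
  have h2 : TZ (flip x i) + (n - (TZ x).+1) < n.
    apply: (TZ_true (j := Ordinal hb)).
    rewrite flipE.
    have -> : (Ordinal hb == i) = false by apply/negP => /eqP e; rewrite -e /= in lt; lia.
    exact: xb.
  rewrite /dominates /=; apply/and3P; split; lia.
have [gt|le] := ltnP (n - (TZ x).+1) i.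
  apply/orP; left.
  have h1 : LO (flip x i) <= LO x.
    apply: (LO_false (j := Ordinal ha)); rewrite flipE.
    have -> : (Ordinal ha == i) = false by apply/negP => /eqP e; rewrite -e /= in gt; lia.
    exact: xa.
  have h2 : TZ (flip x i) + i < n.
    apply: TZ_true; rewrite flipE eqxx TZ_false //; lia.
  rewrite /dominates /=; apply/and3P; split; lia.
apply/orP; right.
have h1 : LO x <= LO (flip x i).
  apply: LO_ge; first exact: LO_le.
  move=> j hj; rewrite flipE.
  have -> : (j == i) = false by apply/negP => /eqP e; rewrite e in hj; lia.
  exact: LO_true.
have h2 : TZ x <= TZ (flip x i).
  apply: TZ_ge; first exact: TZ_le.
  move=> j hj; rewrite flipE.
  have -> : (j == i) = false by apply/negP => /eqP e; rewrite e in hj; lia.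
  exact: TZ_false.
by rewrite /wdominates /= h1 h2.
Qed.

Lemma pareto_optE x : pareto_opt x = (LO x + TZ x == n).
Proof.
apply/idP/idP.
  move=> /forallP po; rewrite eqn_leq LOTZ_le /= leqNgt; apply/negP => hs.
  have ha : LO x < n by lia.
  by have := po (flip x (Ordinal ha)); rewrite improve.
move=> /eqP e; apply/forallP => y; apply/negP => /dominates_sum /=.
have := LOTZ_le y; lia.
Qed.

End Bits.


Section Steps.
Local Open Scope nat_scope.
Variable n : nat.
Implicit Types (x y s : bs n) (P : {set bs n}).

Lemma step_keep P s i x : x \in P -> x \in semo_step P s i \/
  (flip s i \in semo_step P s i /\ wdominates (LOTZ (flip s i)) (LOTZ x)).
Proof.
move=> xP; rewrite /semo_step; case: ifP => _; first by left.
case W : (wdominates (LOTZ (flip s i)) (LOTZ x)).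
  by right; rewrite setU11.
by left; rewrite !inE xP W orbT.
Qed.

Lemma step_new P s i : ~~ [exists y in P, dominates (LOTZ y) (LOTZ (flip s i))] ->
  flip s i \in semo_step P s i.
Proof. by rewrite /semo_step => /negbTE ->; rewrite setU11. Qed.

Lemma wdom_pareto x y : pareto_opt x -> wdominates (LOTZ y) (LOTZ x) ->
  pareto_opt y /\ LO y = LO x.
Proof.
rewrite !pareto_optE /wdominates /= => /eqP e /andP[h1 h2].
have := LOTZ_le y; split; [apply/eqP|]; lia.
Qed.

Lemma front_mono P s i : reached_front P -> reached_front (semo_step P s i).
Proof.
case/fintype.existsP => x /andP[xP px]; apply/fintype.existsP.
case: (step_keep s i xP) => [xP'|[sP' w]]; first by exists x; rewrite xP' px.
by exists (flip s i); rewrite sP' (wdom_pareto px w).1.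
Qed.

Definition mx P := \max_(x in P) (LO x + TZ x).

Lemma mx_mono P s i : mx P <= mx (semo_step P s i).
Proof.
apply/bigmax_leqP => x xP.
case: (step_keep s i xP) => [xP'|[sP' w]]; first exact: leq_bigmax_cond.
apply: leq_trans (leq_bigmax_cond _ sP').
by move: w; rewrite /wdominates /= => /andP[]; lia.
Qed.

Definition covset P : {set 'I_n.+1} :=
  [set k : 'I_n.+1 | [exists x in P, pareto_opt x && (LO x == k)]].
Definition cov P := #|covset P|.

Lemma cov_le P : cov P <= n.+1.
Proof. by have := max_card (mem (covset P)); rewrite card_ord. Qed.

Lemma covset_mono P s i : covset P \subset covset (semo_step P s i).
Proof.
apply/fintype.subsetP => k; rewrite !inE => /fintype.existsP[x /and3P[xP px /eqP e]].
apply/fintype.existsP.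
case: (step_keep s i xP) => [xP'|[sP' w]]; first by exists x; rewrite xP' px e eqxx.
have [p' e'] := wdom_pareto px w.
by exists (flip s i); rewrite sP' p' e' e eqxx.
Qed.

Lemma cov_mono P s i : cov P <= cov (semo_step P s i).
Proof. exact/subset_leq_card/covset_mono. Qed.

Lemma cov_progress P s i : pareto_opt (flip s i) ->
  ~~ [exists z in P, LOTZ z == LOTZ (flip s i)] ->
  cov P < cov (semo_step P s i).
Proof.
move=> po nz; apply: proper_card; apply/fintype.properP; split; first exact: covset_mono.
have hk : LO (flip s i) < n.+1 by rewrite ltnS LO_le.
exists (Ordinal hk).
  rewrite inE; apply/fintype.existsP; exists (flip s i); rewrite po eqxx andbT /=.
  rewrite andbT.
  apply: step_new; apply/fintype.existsP => -[y /andP[_ d]].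
  by move/fintype.forallP: po => /(_ y); rewrite d.
rewrite inE; apply/negP => /fintype.existsP[z /and3P[zP pz /eqP e]].
move/negP: nz; apply; apply/fintype.existsP; exists z; rewrite zP /=.
move: po pz; rewrite !pareto_optE /LOTZ => /eqP h1 /eqP h2.
rewrite /= in e.
have -> : TZ z = TZ (flip s i) by lia.
by rewrite e.
Qed.

Lemma single_step x i : LO x + TZ x < n ->
  semo_step [set x] x i = [set x] \/ semo_step [set x] x i = [set flip x i].
Proof.
move=> hs; rewrite /semo_step.
case/orP: (flip_nonopt i hs) => [d|w].
  by left; rewrite ifT //; apply/fintype.existsP; exists x; rewrite set11 d.
right; rewrite ifF; last first.
  apply/negbTE/negP => /fintype.existsP[y /andP[]]; rewrite inE => /eqP -> /dominates_sum.
  by move: w; rewrite /wdominates /= => /andP[]; lia.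
apply/setP => y; rewrite !inE.
case: eqP => [->|_] //=.
by apply/negP => /andP[/eqP -> ]; rewrite w.
Qed.

End Steps.


Lemma sum_tupleS (R : realType) (T : finType) (t : nat) (F : t.+1.-tuple T -> R) :
  \sum_(cs : t.+1.-tuple T) F cs = \sum_(c : T) \sum_(cs : t.-tuple T) F (cons_tuple c cs).
Proof.
rewrite pair_big /=.
pose h := fun p : T * t.-tuple T => cons_tuple p.1 p.2.
rewrite (reindex h) //=.
exists (fun cs => (thead cs, behead_tuple cs)).
  by move=> [c cs] _; rewrite /h /= theadE; congr pair; apply/val_inj.
by move=> cs _; rewrite /h /=; apply/val_inj; rewrite /= [in RHS](tuple_eta cs).
Qed.

Lemma sum_tuple0 (R : realType) (T : finType) (F : 0.-tuple T -> R) :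
  \sum_(cs : 0.-tuple T) F cs = F [tuple].
Proof.
rewrite (eq_bigl (pred1 [tuple])) ?big_pred1_eq // => cs /=.
by rewrite [cs]tuple0; apply/esym/eqP.
Qed.

Lemma forall_ordS (t : nat) (P : nat -> bool) :
  [forall k : 'I_t.+2, P k] = P 0%N && [forall k : 'I_t.+1, P k.+1].
Proof.
apply/fintype.forallP/andP.
  move=> H; split; first exact: (H ord0).
  by apply/fintype.forallP => k; exact: (H (lift ord0 k)).
move=> [h0 /fintype.forallP h] [[|k] hk] //=.
exact: (h (Ordinal (hk : (k < t.+1)%N))).
Qed.

Section Prob.
Variables (n : nat) (R : realType) (sel : selection n R) (s0 : bs n).
Variable E : {set bs n} -> bool.
Notation hist := (seq (bs n * 'I_n)).

Definition W (pre : hist) (c : bs n * 'I_n) : R := sel s0 pre c.1 * (n%:R)^-1.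

Lemma path_rcons pre cs c : path_prob_from sel s0 pre (rcons cs c) =
  path_prob_from sel s0 pre cs * W (pre ++ cs) c.
Proof.
elim: cs pre => [|c' cs IH] pre /=; first by rewrite cats0 mul1r mulr1.
by rewrite IH cat_rcons !mulrA.
Qed.

Lemma hist_rcons cs c : hist_prob sel s0 (rcons cs c) = hist_prob sel s0 cs * W cs c.
Proof. by rewrite /hist_prob path_rcons mulrA. Qed.

Lemma pop_rcons cs c : pop_after s0 (rcons cs c) = semo_step (pop_after s0 cs) c.1 c.2.
Proof. by rewrite /pop_after foldl_rcons. Qed.

Definition B (pre : hist) (t : nat) : R :=
  \sum_(cs : t.-tuple (bs n * 'I_n))
    (if [forall k : 'I_t.+1, ~~ E (pop_after s0 (pre ++ take k cs))]
     then path_prob_from sel s0 pre cs else 0).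

Lemma B0 pre : B pre 0 = if E (pop_after s0 pre) then 0 else 1.
Proof.
rewrite /B sum_tuple0 /=.
have -> : [forall k : 'I_1, ~~ E (pop_after s0 (pre ++ take k [tuple]))] =
   ~~ E (pop_after s0 pre).
  apply/fintype.forallP/idP; first by move=> /(_ ord0); rewrite cats0.
  by move=> h [[|k] hk] //=; rewrite cats0.
by case: (E _).
Qed.

Lemma BS pre t : B pre t.+1 =
  if E (pop_after s0 pre) then 0 else \sum_c W pre c * B (rcons pre c) t.
Proof.
rewrite /B sum_tupleS.
case: ifP => hE.
  apply: big1 => c _; apply: big1 => cs _.
  by rewrite (forall_ordS _ (fun k => ~~ E (pop_after s0 (pre ++ take k (cons_tuple c cs))))) /= cats0 hE.
apply: eq_bigr => c _; rewrite mulr_sumr; apply: eq_bigr => cs _.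
rewrite (forall_ordS _ (fun k => ~~ E (pop_after s0 (pre ++ take k (cons_tuple c cs))))) /= cats0 hE /=.
have -> : [forall k : 'I_t.+1, ~~ E (pop_after s0 (pre ++ c :: take k cs))] =
          [forall k : 'I_t.+1, ~~ E (pop_after s0 (rcons pre c ++ take k cs))].
  by apply: eq_forallb => k; rewrite cat_rcons.
by case: ifP; rewrite ?mulr0.
Qed.

Lemma drift_bound (Good : hist -> Prop) (Phi : hist -> R) :
  (forall pre, Good pre -> 0 <= Phi pre) ->
  (forall pre c, Good pre -> 0 < W pre c -> Good (rcons pre c)) ->
  (forall pre c, 0 <= W pre c) ->
  (forall pre, Good pre -> ~~ E (pop_after s0 pre) ->
     1 + \sum_c W pre c * Phi (rcons pre c) <= Phi pre) ->
  forall m pre, Good pre -> \sum_(t < m) B pre t <= Phi pre.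
Proof.
move=> Phi0 Gstep W0 Hdrift; elim=> [|m IH] pre Gp.
  by rewrite big_ord0 Phi0.
rewrite big_ord_recl B0.
under eq_bigr => i _ do rewrite BS.
case: ifP => hE.
  by rewrite big1 ?add0r ?Phi0 // => i _; rewrite hE.
apply: le_trans (Hdrift _ Gp (negbT hE)).
rewrite lerD2l.
rewrite exchange_big /=; apply: ler_sum => c _.
rewrite -mulr_sumr.
have [W0'|Wpos] := eqVneq (W pre c) 0; first by rewrite W0' !mul0r.
have Wp : 0 < W pre c by rewrite lt_def Wpos W0.
by apply: ler_wpM2l; [exact: W0 | apply: IH; exact: Gstep].
Qed.

End Prob.


Section Main.
Variables (n : nat) (R : realType) (sel : selection n R).
Hypothesis n0 : (0 < n)%N.
Hypothesis vs : valid_selection sel.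
Notation hist := (seq (bs n * 'I_n)).

Lemma W_ge0 s0 pre c : 0 <= W sel s0 pre c.
Proof. by have [h _ _] := vs s0 pre; rewrite /W mulr_ge0 // invr_ge0. Qed.

Lemma W_pos_in s0 pre c : 0 < W sel s0 pre c -> c.1 \in pop_after s0 pre.
Proof.
have [_ h _] := vs s0 pre; apply: contraTT => /h.
by rewrite /W => ->; rewrite mul0r ltxx.
Qed.

Lemma sumW s0 pre : \sum_c W sel s0 pre c = 1.
Proof.
have [_ h0 h1] := vs s0 pre.
have -> : \sum_c W sel s0 pre c = \sum_x \sum_(i : 'I_n) (sel s0 pre x / n%:R).
  by rewrite pair_big.
have cI : forall (a : R), \sum_(i : 'I_n) a = a * n%:R.
  by move=> a; rewrite sumr_const card_ord mulr_natr.
have nz : n%:R != 0 :> R by rewrite pnatr_eq0 -lt0n.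
under eq_bigr => x _ do rewrite cI mulfVK //.
rewrite (bigID (fun x => x \in pop_after s0 pre)) /= [X in _ + X]big1 ?addr0 //.
Qed.

Lemma path_ge0 s0 pre cs : 0 <= path_prob_from sel s0 pre cs.
Proof.
elim: cs pre => [|c cs IH] pre /=; first exact: ler01.
by rewrite mulr_ge0 // -/(W sel s0 pre c) W_ge0.
Qed.

Lemma hist_ge0 s0 cs : 0 <= hist_prob sel s0 cs.
Proof. by rewrite /hist_prob mulr_ge0 ?path_ge0 // invr_ge0. Qed.

Lemma drift_from s0 pre (Phi : hist -> R) (Phi0 : R) (D : bs n * 'I_n -> R) :
  (forall c, 0 < W sel s0 pre c -> Phi (rcons pre c) <= Phi0 - D c) ->
  1 <= \sum_c W sel s0 pre c * D c ->
  1 + \sum_c W sel s0 pre c * Phi (rcons pre c) <= Phi0.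
Proof.
move=> H HD.
have : \sum_c W sel s0 pre c * Phi (rcons pre c) <= \sum_c W sel s0 pre c * (Phi0 - D c).
  apply: ler_sum => c _.
  have [W0|Wn0] := eqVneq (W sel s0 pre c) 0; first by rewrite W0 !mul0r.
  have Wp : 0 < W sel s0 pre c by rewrite lt_def Wn0 W_ge0.
  by apply: ler_wpM2l; [exact: W_ge0 | exact: H].
under [X in _ <= X -> _]eq_bigr => c _ do rewrite mulrBr.
rewrite sumrB -mulr_suml sumW mul1r => h.
by rewrite -lerBrDl; apply: le_trans h _; rewrite lerB.
Qed.

Lemma tail_B E t : tail_prob sel E t = \sum_s0 (2 ^ n)%:R^-1 * B sel s0 E [::] t.
Proof.
rewrite /tail_prob; apply: eq_bigr => s0 _; rewrite /B mulr_sumr.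
apply: eq_bigr => cs _; rewrite /hist_prob.
by case: ifP; rewrite ?mulr0.
Qed.

Lemma time_bound E (M : R) (Good : bs n -> hist -> Prop) (Phi : bs n -> hist -> R) :
  (forall s0, Good s0 [::]) -> (forall s0, Phi s0 [::] <= M) ->
  (forall s0 pre, Good s0 pre -> 0 <= Phi s0 pre) ->
  (forall s0 pre c, Good s0 pre -> 0 < W sel s0 pre c -> Good s0 (rcons pre c)) ->
  (forall s0 pre, Good s0 pre -> ~~ E (pop_after s0 pre) ->
     1 + \sum_c W sel s0 pre c * Phi s0 (rcons pre c) <= Phi s0 pre) ->
  (expected_time sel E <= M%:E)%E.
Proof.
move=> G0 PM P0 GS Dr.
have t0 : forall t, 0 <= tail_prob sel E t.
  move=> t; apply: sumr_ge0 => s0 _; apply: sumr_ge0 => cs _.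
  by case: ifP => // _; exact: hist_ge0.
rewrite /expected_time.
apply: (lime_le (is_cvg_nneseries (fun k _ _ => t0 k : (0 <= (tail_prob sel E k)%:E)%E))).
apply: nearW => m.
rewrite sumEFin lee_fin big_mkord.
under eq_bigr => t _ do rewrite tail_B.
rewrite exchange_big /=.
have h2 : 0 < (2 ^ n)%:R :> R by rewrite ltr0n expn_gt0.
apply: le_trans (_ : \sum_(s0 : bs n) (2 ^ n)%:R^-1 * M <= M).
  apply: ler_sum => s0 _; rewrite -mulr_sumr ler_pM2l ?invr_gt0 //.
  apply: (le_trans _ (PM s0)).
  apply: (drift_bound (Good := Good s0)) => //.
  - by move=> pre; exact: P0.
  - by move=> pre c; exact: GS.
  - by move=> pre c; exact: W_ge0.
  - by move=> pre; exact: Dr.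
rewrite sumr_const card_ffun card_bool card_ord -mulrnAr -[M *+ _]mulr_natl.
by rewrite mulrA mulVf ?mul1r // gt_eqF.
Qed.

End Main.


Section Main2.
Variables (n : nat) (R : realType) (sel : selection n R).
Hypothesis n0 : (0 < n)%N.
Hypothesis vs : valid_selection sel.
Notation hist := (seq (bs n * 'I_n)).
Implicit Types (x s : bs n) (pre : hist) (c : bs n * 'I_n).

Definition Inv (P : {set bs n}) := reached_front P \/ exists x, P = [set x].
Definition Good s0 pre := 0 < hist_prob sel s0 pre /\ Inv (pop_after s0 pre).

Lemma pop0 (s0 : bs n) : pop_after s0 [::] = [set s0].
Proof. by []. Qed.

Lemma Good0 (s0 : bs n) : Good s0 [::].
Proof.
split; last by right; exists s0.
by rewrite /hist_prob /= mulr1 invr_gt0 ltr0n expn_gt0.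
Qed.

Lemma front1 x : pareto_opt x -> reached_front [set x].
Proof. by move=> px; apply/fintype.existsP; exists x; rewrite set11. Qed.

Lemma GoodS (s0 : bs n) pre c : Good s0 pre -> 0 < W sel s0 pre c -> Good s0 (rcons pre c).
Proof.
move=> [hp hI] hW; split; first by rewrite hist_rcons mulr_gt0.
have cin := W_pos_in vs hW.
rewrite /Inv pop_rcons; case: hI => [hf|[x hx]]; first by left; apply: front_mono.
move: cin; rewrite hx inE => /eqP ->.
case px : (pareto_opt x); first by left; apply/front_mono/front1.
have hs : (LO x + TZ x < n)%N.
  by move: px; rewrite pareto_optE ltn_neqAle LOTZ_le andbT => /negbT.
by right; case: (single_step c.2 hs) => ->; [exists x | exists (flip x c.2)].
Qed.

Lemma nonfront_single (s0 : bs n) pre : Good s0 pre -> ~~ reached_front (pop_after s0 pre) ->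
  exists x, pop_after s0 pre = [set x] /\ (LO x + TZ x < n)%N.
Proof.
move=> [_ [hf|[x hx]]] nf; first by rewrite hf in nf.
exists x; split => //.
have : ~~ pareto_opt x by apply: contra nf => px; rewrite hx front1.
by rewrite pareto_optE ltn_neqAle LOTZ_le andbT.
Qed.

Lemma mx_le (P : {set bs n}) : (mx P <= n)%N.
Proof. by apply/bigmax_leqP => x _; exact: LOTZ_le. Qed.

Lemma mx1 x : mx [set x] = (LO x + TZ x)%N.
Proof. by rewrite /mx big_set1. Qed.

Lemma mx_improve x (h : (LO x < n)%N) : (LO x + TZ x < n)%N ->
  (LO x + TZ x < mx (semo_step [set x] x (Ordinal h)))%N.
Proof.
move=> hs; have d := improve h hs.
have sP : flip x (Ordinal h) \in semo_step [set x] x (Ordinal h).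
  apply: step_new; apply/negP => /fintype.existsP[y /andP[]]; rewrite inE => /eqP -> d'.
  by have := dominates_sum d; have := dominates_sum d'; rewrite /=; lia.
apply: leq_trans (leq_bigmax_cond _ sP).
by have := dominates_sum d.
Qed.

Lemma sel1 (s0 : bs n) pre x : pop_after s0 pre = [set x] -> sel s0 pre x = 1.
Proof. by have [_ _ h] := vs s0 pre => hx; rewrite hx big_set1 in h. Qed.

(* drift in a non-front state, generic in the continuation potential *)
Lemma drift_nonfront (s0 : bs n) pre (K : R) (F : {set bs n} -> R) :
  Good s0 pre -> ~~ reached_front (pop_after s0 pre) ->
  0 <= K ->
  (forall Q, 0 <= F Q <= K) ->
  1 + \sum_c W sel s0 pre c *
        (if reached_front (pop_after s0 (rcons pre c)) then F (pop_after s0 (rcons pre c))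
         else n%:R * (n%:R - (mx (pop_after s0 (rcons pre c)))%:R) + K)
   <= n%:R * (n%:R - (mx (pop_after s0 pre))%:R) + K.
Proof.
move=> G nf K0 FK.
have [x [hx hs]] := nonfront_single G nf.
have ha : (LO x < n)%N by lia.
pose ca := (x, Ordinal ha).
apply: (drift_from n0 vs (D := fun c => if c == ca then n%:R else 0)
  (Phi := fun pre' => if reached_front (pop_after s0 pre') then F (pop_after s0 pre')
         else n%:R * (n%:R - (mx (pop_after s0 pre'))%:R) + K)).
  move=> [s i] hW.
  have := W_pos_in vs hW; rewrite hx inE /= => /eqP es; subst s.
  rewrite pop_rcons hx mx1 /=.
  have hm := mx_mono [set x] x i; rewrite mx1 in hm.
  have hmn := mx_le (semo_step [set x] x i).
  have hn1 : (1 <= n)%N by [].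
  case: ifP => hf.
    have [F0 F1] := andP (FK (semo_step [set x] x i)).
    have hD : (if (x, i) == ca then n%:R else 0) <= n%:R :> R by case: ifP.
    have : ((LO x + TZ x)%:R + 1 <= n%:R :> R) by rewrite natr1 ler_nat.
    have : 1 <= n%:R :> R by rewrite ler1n.
    move=> h1 h2.
    have hp : 0 <= n%:R * (n%:R - (LO x + TZ x)%:R - 1) :> R.
      by apply: mulr_ge0 => //; rewrite subr_ge0 lerBrDr addrC.
    move: hD; set d := (if _ then _ else _) => hD.
    move: hp; set m := ((LO x + TZ x)%:R : R) => hp.
    set N := (n%:R : R) in hp hD h1 h2 *.
    lra.
  case: ifP => [/eqP [ei]|_].
    subst i.
    have h := mx_improve ha hs.
    have h' : (LO x + TZ x)%:R + 1 <= (mx (semo_step [set x] x (Ordinal ha)))%:R :> R.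
      by rewrite natr1 ler_nat.
    have hp : 0 <= n%:R * ((mx (semo_step [set x] x (Ordinal ha)))%:R - (LO x + TZ x)%:R - 1) :> R.
      by apply: mulr_ge0 => //; rewrite subr_ge0 lerBrDr addrC.
    move: hp h'.
    set m := ((LO x + TZ x)%:R : R). set m' := ((mx _)%:R : R). set N := (n%:R : R).
    move=> hp h'. rewrite mulrBr in hp. rewrite mulrBr. lra.
  rewrite subr0 lerD2r ler_wpM2l // lerB // ler_nat.
  by [].
rewrite (bigD1 ca) //= eqxx big1 ?addr0; last by move=> c /negbTE ->; rewrite mulr0.
by rewrite /W (sel1 hx) mul1r mulVf // pnatr_eq0 -lt0n.
Qed.

End Main2.


Section Main3.
Variables (n : nat) (R : realType) (sel : selection n R).
Hypothesis n0 : (0 < n)%N.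
Hypothesis vs : valid_selection sel.
Notation hist := (seq (bs n * 'I_n)).
Implicit Types (x s : bs n) (pre : hist) (c : bs n * 'I_n).
Variable p : R.
Hypothesis p0 : 0 < p.
Hypothesis Hg : forall s0 cs, 0 < hist_prob sel s0 cs ->
       reached_front (pop_after s0 cs) -> ~~ covers_front (pop_after s0 cs) ->
       p <= \sum_(x in pop_after s0 cs | good (pop_after s0 cs) x) sel s0 cs x.

Definition Kp : R := n%:R / p.
Lemma Kp_ge0 : 0 <= Kp.
Proof. by rewrite /Kp divr_ge0 // ltW. Qed.

Definition FC (Q : {set bs n}) : R := Kp * ((n.+1)%:R - (cov Q)%:R).

Lemma FC_bound Q : 0 <= FC Q <= Kp * (n.+1)%:R.
Proof.
have := cov_le Q; rewrite -(ler_nat R) => h.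
have := Kp_ge0 => hK.
rewrite /FC; apply/andP; split.
  by apply: mulr_ge0 => //; rewrite subr_ge0.
by rewrite ler_wpM2l // lerBlDr lerDl.
Qed.

Definition newc (P : {set bs n}) c :=
  pareto_opt (flip c.1 c.2) && ~~ [exists z in P, LOTZ z == LOTZ (flip c.1 c.2)].

Lemma drift_front (s0 : bs n) pre : Good sel s0 pre ->
  reached_front (pop_after s0 pre) -> ~~ covers_front (pop_after s0 pre) ->
  1 + \sum_c W sel s0 pre c * FC (pop_after s0 (rcons pre c)) <= FC (pop_after s0 pre).
Proof.
move=> G hf nc.
set P := pop_after s0 pre.
apply: (drift_from n0 vs (D := fun c => if good P c.1 && newc P c then Kp else 0)
  (Phi := fun pre' => FC (pop_after s0 pre'))).
  move=> [s i] hW /=; rewrite pop_rcons /= /FC -/P.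
  have hK := Kp_ge0.
  case: ifP => [/andP[_ /andP[po nz]]|_].
    have h : (cov P)%:R + 1 <= (cov (semo_step P s i))%:R :> R.
      by rewrite natr1 ler_nat; exact: cov_progress po nz.
    rewrite -[X in _ <= _ - X]mulr1 -mulrBr ler_wpM2l //; lra.
  rewrite subr0 ler_wpM2l // lerB // ler_nat.
  exact: cov_mono.
have hgood := Hg G.1 hf nc.
have nz : n%:R != 0 :> R by rewrite pnatr_eq0 -lt0n.
have -> : \sum_c W sel s0 pre c * (if good P c.1 && newc P c then Kp else 0) =
    \sum_x \sum_(i : 'I_n) (sel s0 pre x / n%:R * (if good P x && newc P (x, i) then Kp else 0)).
  by rewrite pair_big.
apply: (le_trans (_ : 1 <= p * (Kp / n%:R))).
  have pn : p != 0 by rewrite gt_eqF.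
  rewrite /Kp le_eqVlt; apply/orP; left; apply/eqP; field.
  by apply/andP.
apply: (le_trans (_ : _ <= \sum_x (if good P x then sel s0 pre x * (Kp / n%:R) else 0))).
  rewrite -big_mkcond /= -mulr_suml.
  apply: ler_wpM2r; first by rewrite divr_ge0 ?Kp_ge0.
  apply: (le_trans hgood); rewrite le_eqVlt; apply/orP; left; apply/eqP.
  by apply: eq_bigl => x; rewrite /good; case: (x \in P).
have [sge _ _] := vs s0 pre.
apply: ler_sum => x _.
have t0 : forall i : 'I_n, 0 <= sel s0 pre x / n%:R * (if good P x && newc P (x, i) then Kp else 0).
  move=> i; apply: mulr_ge0; first by rewrite divr_ge0.
  by case: ifP => // _; exact: Kp_ge0.
case: ifP => gx; last by apply: sumr_ge0 => i _; rewrite /= mulr0.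
have := gx; rewrite /good => /and3P[_ _ /fintype.existsP[i0 hi0]].
rewrite (bigD1 i0) //= /newc /= hi0 /=.
rewrite mulrA mulrAC -[X in X <= _]addr0 lerD2l.
apply: sumr_ge0 => i _; apply: mulr_ge0; first by rewrite divr_ge0.
by case: ifP => // _; exact: Kp_ge0.
Qed.

End Main3.


Section Final.
Variables (n : nat) (R : realType) (sel : selection n R).
Hypothesis n0 : (0 < n)%N.
Hypothesis vs : valid_selection sel.
Notation hist := (seq (bs n * 'I_n)).
Implicit Types (x s : bs n) (pre : hist) (c : bs n * 'I_n).

Definition Phi1 (s0 : bs n) pre : R :=
  if reached_front (pop_after s0 pre) then (fun _ => 0) (pop_after s0 pre)
  else n%:R * (n%:R - (mx (pop_after s0 pre))%:R) + 0.

Lemma nm_ge0 (P : {set bs n}) : 0 <= n%:R * (n%:R - (mx P)%:R) :> R.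
Proof. by apply: mulr_ge0 => //; rewrite subr_ge0 ler_nat mx_le. Qed.

Lemma nm_le (P : {set bs n}) : n%:R * (n%:R - (mx P)%:R) <= n%:R * n%:R :> R.
Proof. by rewrite ler_wpM2l // lerBlDr lerDl. Qed.

Lemma final1 : (expected_time sel (@reached_front n) <= (3 * n%:R ^+ 2)%:E)%E.
Proof.
apply: (time_bound vs (Good := Good sel) (Phi := Phi1)).
- exact: Good0.
- move=> s0; rewrite /Phi1; have h := nm_le (pop_after s0 [::]).
  have h0 : 0 <= n%:R * n%:R :> R by rewrite mulr_ge0.
  rewrite expr2; case: ifP => _; lra.
- move=> s0 pre _; rewrite /Phi1; case: ifP => // _; rewrite addr0; exact: nm_ge0.
- by move=> s0 pre c G hW; exact: (GoodS vs G hW).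
- move=> s0 pre G nf; rewrite {2}/Phi1 (negbTE nf).
  apply: (drift_nonfront n0 vs (F := fun _ => 0)) => //.
  by move=> Q; rewrite lexx.
Qed.

Variable p : R.
Hypothesis p0 : 0 < p.
Hypothesis Hg : forall s0 cs, 0 < hist_prob sel s0 cs ->
       reached_front (pop_after s0 cs) -> ~~ covers_front (pop_after s0 cs) ->
       p <= \sum_(x in pop_after s0 cs | good (pop_after s0 cs) x) sel s0 cs x.

Definition ones : bs n := [ffun _ => true].
Definition zeros : bs n := [ffun _ => false].

Lemma LO_ones : LO ones = n.
Proof.
apply/eqP; rewrite eqn_leq LO_le /=; apply: LO_ge => // j _; by rewrite ffunE.
Qed.

Lemma TZ_zeros : TZ zeros = n.
Proof.
apply/eqP; rewrite eqn_leq TZ_le /=; apply: TZ_ge => // j _; by rewrite ffunE.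
Qed.

Lemma p_le1 : p <= 1.
Proof.
have po1 : pareto_opt ones.
  rewrite pareto_optE; have := LOTZ_le ones; rewrite LO_ones; lia.
have po0 : pareto_opt zeros.
  rewrite pareto_optE; have := LOTZ_le zeros; rewrite TZ_zeros; lia.
have nc : ~~ covers_front (pop_after ones [::]).
  apply/negP => /fintype.forallP /(_ zeros); rewrite po0 /= => /fintype.existsP[x].
  rewrite inE => /andP[/eqP -> /eqP e].
  have : LO ones = LO zeros by case: e.
  have := LOTZ_le zeros; rewrite LO_ones TZ_zeros; lia.
have := Hg (Good0 sel ones).1 (front1 po1) nc.
move=> h; apply: le_trans h _.
have [sge _ s1] := vs ones [::].
rewrite -[X in _ <= X]s1 big_mkcondr /=; apply: ler_sum => x _.
by case: ifP.
Qed.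

Definition Phi2 (s0 : bs n) pre : R :=
  if reached_front (pop_after s0 pre) then FC p (pop_after s0 pre)
  else n%:R * (n%:R - (mx (pop_after s0 pre))%:R) + Kp n p * (n.+1)%:R.

Lemma final2 : (expected_time sel (@covers_front n) <= (3 * n%:R ^+ 2 / p)%:E)%E.
Proof.
have hK := Kp_ge0 n p0.
apply: (time_bound vs (Good := Good sel) (Phi := Phi2)).
- exact: Good0.
- move=> s0; rewrite /Phi2.
  apply: (le_trans (_ : _ <= n%:R * n%:R + Kp n p * (n.+1)%:R)).
    case: ifP => _.
      have := FC_bound p0 (pop_after s0 [::]) => /andP[_ h].
      have : 0 <= n%:R * n%:R :> R by rewrite mulr_ge0.
      lra.
    by rewrite lerD2r nm_le.
  have q1 : 1 <= p^-1 by rewrite invf_ge1 // p_le1.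
  have hn : 1 <= n%:R :> R by rewrite ler1n.
  rewrite /Kp expr2 -natr1.
  set N := (n%:R : R) in hn *. set q := p^-1 in q1 *.
  have h1 : 0 <= N * N * (q - 1) by rewrite !mulr_ge0 // ?subr_ge0 //; lra.
  have h2 : 0 <= N * q * (N - 1) by rewrite !mulr_ge0 // ?subr_ge0 //; lra.
  rewrite !mulrBr !mulr1 in h1 h2.
  lra.
- move=> s0 pre _; rewrite /Phi2; case: ifP => _.
    by case/andP: (FC_bound p0 (pop_after s0 pre)).
  by rewrite addr_ge0 ?nm_ge0 // mulr_ge0.
- by move=> s0 pre c G hW; exact: (GoodS vs G hW).
- move=> s0 pre G nc.
  case hf : (reached_front (pop_after s0 pre)).
    rewrite {2}/Phi2 hf.
    have -> : \sum_c W sel s0 pre c * Phi2 s0 (rcons pre c) =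
              \sum_c W sel s0 pre c * FC p (pop_after s0 (rcons pre c)).
      by apply: eq_bigr => c _; rewrite /Phi2 pop_rcons (front_mono c.1 c.2 hf).
    exact: (drift_front n0 vs p0 Hg G hf nc).
  rewrite {2}/Phi2 hf.
  apply: (drift_nonfront n0 vs (F := FC p)) => //; first by rewrite hf.
  - by rewrite mulr_ge0.
  - exact: FC_bound.
Qed.

End Final.

Theorem lemma6 (R : realType) :
  exists C : R, 0 < C /\
  forall (n : nat) (p_good : R) (sel : selection n R),
    (0 < n)%N -> 0 < p_good ->
    valid_selection sel ->
    (forall s0 cs, 0 < hist_prob sel s0 cs ->
       reached_front (pop_after s0 cs) -> ~~ covers_front (pop_after s0 cs) ->
       p_good <= \sum_(x in pop_after s0 cs | good (pop_after s0 cs) x) sel s0 cs x) ->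
    (expected_time sel (@reached_front n) <= (C * n%:R ^+ 2)%:E)%E /\
    (expected_time sel (@covers_front n) <= (C * n%:R ^+ 2 / p_good)%:E)%E.
Proof.
exists 3; split => // n p sel n0 p0 vs Hg; split.
  exact: final1.
exact: (final2 n0 vs p0 Hg).
Qed.
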